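(* Let $G$ be a perfectly labeled graph on $[n]$ which is crossing closed. Then $G$ is upper crossing closed with respect to the colexicographic order on $E(G)$, and also with respect to the lexicographic order on $E(G)$.
   Context: Graphs are finite simple graphs with vertex set $[n]$; edges are written $ij$ with $i<j$. Two edges $a_1a_2$ and $b_1b_2$ cross if $a_1<b_1<a_2<b_2$ or $b_1<a_1<b_2<a_2$. $G$ is perfectly labeled if whenever $ik,jk\in E(G)$ with $i<j<k$, also $ij\in E(G)$. Lexicographic order: $ab\lhd a'b'$ iff $a<a'$, or $a=a'$ and $b<b'$; colexicographic order: $ab\lhd a'b'$ iff $b<b'$, or $b=b'$ and $a<a'$. Two crossing edges $e,f$ are crossing closed if among all induced connected subgraphs of $G$ containing $e$ and $f$ there is a unique minimal one under containment, denoted $J(e,f)$; $G$ is crossing closed if all pairs of crossing edges are. $G$ is upper crossing closed with respect to a total order $\unlhd$ on $E(G)$ if it is crossing closed and for every pair of crossing edges $e,f$, $J(e,f)$ contains an edge $h$ with $h\lhd e$ and $h\lhd f$. *)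

(* Defs.v *)
From mathcomp Require Import all_boot.
Set Implicit Arguments. Unset Strict Implicit. Unset Printing Implicit Defensive.

(* A finite simple graph on the vertex set [n] is modelled by vertices 'I_n
   (labels 0..n-1, in the same order as 1..n) and a symmetric irreflexive
   adjacency relation E. *)

Definition simple_graph n (E : rel 'I_n) : Prop :=
  symmetric E /\ irreflexive E.

Definition edge_of n (E : rel 'I_n) (e : 'I_n * 'I_n) : bool :=
  (e.1 < e.2) && E e.1 e.2.

Definition cross n (e f : 'I_n * 'I_n) : bool :=
  ((e.1 < f.1) && (f.1 < e.2) && (e.2 < f.2)) ||
  ((f.1 < e.1) && (e.1 < f.2) && (f.2 < e.2)).

Definition perfectly_labeled n (E : rel 'I_n) : Prop :=
  forall i j k : 'I_n, i < j -> j < k -> E i k -> E j k -> E i j.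

Definition lex_lt n (e f : 'I_n * 'I_n) : bool :=
  (e.1 < f.1) || ((e.1 == f.1) && (e.2 < f.2)).

Definition colex_lt n (e f : 'I_n * 'I_n) : bool :=
  (e.2 < f.2) || ((e.2 == f.2) && (e.1 < f.1)).

Definition induced_connected n (E : rel 'I_n) (S : {set 'I_n}) : Prop :=
  S != set0 /\
  forall x y, x \in S -> y \in S ->
    connect (fun u v => [&& E u v, u \in S & v \in S]) x y.

Definition conn_containing n (E : rel 'I_n) (e f : 'I_n * 'I_n)
  (S : {set 'I_n}) : Prop :=
  induced_connected E S /\
  [/\ e.1 \in S, e.2 \in S, f.1 \in S & f.2 \in S].

Definition minimal_conn_containing n (E : rel 'I_n) (e f : 'I_n * 'I_n)
  (S : {set 'I_n}) : Prop :=
  conn_containing E e f S /\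
  forall T : {set 'I_n}, conn_containing E e f T -> T \subset S -> T = S.

Definition is_J n (E : rel 'I_n) (e f : 'I_n * 'I_n) (J : {set 'I_n}) : Prop :=
  minimal_conn_containing E e f J /\
  forall T, minimal_conn_containing E e f T -> T = J.

Definition crossing_closed_pair n (E : rel 'I_n) (e f : 'I_n * 'I_n) : Prop :=
  exists J, is_J E e f J.

Definition crossing_closed n (E : rel 'I_n) : Prop :=
  forall e f, edge_of E e -> edge_of E f -> cross e f ->
    crossing_closed_pair E e f.

Definition upper_crossing_closed n (E : rel 'I_n)
  (lt : 'I_n * 'I_n -> 'I_n * 'I_n -> bool) : Prop :=
  crossing_closed E /\
  forall e f, edge_of E e -> edge_of E f -> cross e f ->
    forall J, is_J E e f J ->
      exists h, [/\ edge_of E h, h.1 \in J, h.2 \in J, lt h e & lt h f].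

(* Main.v *)
Require Import Defs.
From mathcomp Require Import all_boot.
From mathcomp Require Import zify.

Set Implicit Arguments. Unset Strict Implicit. Unset Printing Implicit Defensive.

Definition Rin n (E : rel 'I_n) (S : {set 'I_n}) : rel 'I_n :=
  fun a b => [&& E a b, a \in S & b \in S].

Lemma remove_vertex n (E : rel 'I_n) (S : {set 'I_n}) (w : 'I_n) :
  symmetric E -> irreflexive E ->
  (forall a b, a \in S -> b \in S -> E w a -> E w b -> a != b -> E a b) ->
  forall x y, x != w -> y != w -> connect (Rin E S) x y ->
  connect (Rin E (S :\ w)) x y.
Proof.
move=> sym irr Hcl.
pose phi := fun a => if a == w then odflt w [pick z | E w z && (z \in S :\ w)] else a.
suff H: forall x y, connect (Rin E S) x y -> connect (Rin E (S:\w)) (phi x) (phi y).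
  by move=> x y xw yw /H; rewrite /phi (negbTE xw) (negbTE yw).
move=> x y /connectP [p pth ->] {y}.
elim: p x pth => [|a p IH] x /=; first by move=> _; exact: connect0.
case/andP => /and3P [Exa xS aS] pth.
apply: connect_trans (IH _ pth).
rewrite /phi; case: (eqVneq x w) => [exw|xw]; case: (eqVneq a w) => [eaw|aw].
- by subst; rewrite irr in Exa.
- subst x; case: pickP => [z /andP[Ewz zS]|none] /=.
  + case: (eqVneq z a) => [->|za]; first exact: connect0.
    apply: connect1; rewrite /Rin zS !inE aw aS andbT /=.
    rewrite andbT; apply: Hcl => //; by move: zS; rewrite !inE => /andP[].
  + by move: (none a); rewrite Exa !inE aw aS.
- subst a; case: pickP => [z /andP[Ewz zS]|none] /=.
  + case: (eqVneq z x) => [->|zx]; first exact: connect0.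
    apply: connect1; rewrite /Rin zS !inE xw xS /= ?andbT.
    rewrite sym; apply: Hcl => //; first by move: zS; rewrite !inE => /andP[].
    by rewrite sym.
  + by move: (none x); rewrite sym Exa !inE xw xS.
- by apply: connect1; rewrite /Rin !inE xw aw Exa xS aS.
Qed.

Definition Tb n (S : {set 'I_n}) (b : nat) := [set z in S | z < b].

Lemma lower_connect n (E : rel 'I_n) (S : {set 'I_n}) x y :
  symmetric E -> irreflexive E -> perfectly_labeled E ->
  connect (Rin E S) x y ->
  forall b, maxn x y < b -> connect (Rin E (Tb S b)) x y.
Proof.
move=> sym irr pl Hc b; move Hd: (n - b) => d; elim: d b Hd => [|d IH] b Hd Hb.
  have ->: Tb S b = S; last by [].
  by apply/setP => z; rewrite !inE; case: (z \in S) => //=; have := ltn_ord z; lia.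
have bn : b < n by lia.
have H1 := IH b.+1 ltac:(lia) ltac:(lia).
have ->: Tb S b = Tb S b.+1 :\ Ordinal bn.
  apply/setP => z; rewrite !inE -val_eqE /=.
  case: (z \in S); rewrite ?andbF //=; lia.
apply: remove_vertex => //.
- move=> a c; rewrite !inE => /andP[_ ab] /andP[_ cb] Eba Ebc ac.
  have lt_b : forall z : 'I_n, z < b.+1 -> E (Ordinal bn) z -> z < b.
    move=> z zb Ez; case: (ltngtP z b) => h; [by [] | lia | ].
    have ez : z = Ordinal bn by apply: val_inj.
    by move: Ez; rewrite ez irr.
  have ha := lt_b a ab Eba; have hc := lt_b c cb Ebc.
  have Eab : E a (Ordinal bn) by rewrite sym.
  have Ecb : E c (Ordinal bn) by rewrite sym.
  case: (ltngtP a c) => h.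
  + exact: (pl a c (Ordinal bn) h hc Eab Ecb).
  + rewrite sym; exact: (pl c a (Ordinal bn) h ha Ecb Eab).
  + by move: ac; rewrite -val_eqE /= h eqxx.
- by rewrite -val_eqE /=; lia.
- by rewrite -val_eqE /=; lia.
Qed.

Lemma key n (E : rel 'I_n) (S : {set 'I_n}) (u v : 'I_n) :
  symmetric E -> irreflexive E -> perfectly_labeled E ->
  connect (Rin E S) u v -> u < v ->
  exists h, [/\ edge_of E h, h.1 \in S, h.2 \in S, h.1 <= u & h.2 <= v].
Proof.
move=> sym irr pl Hc uv.
have := lower_connect sym irr pl Hc (b := v.+1) ltac:(lia).
case/connectP => p pth lastp.
case: p pth lastp => [|p1 p] /=.
  by move=> _ e; move: uv; rewrite e ltnn.
case/andP => /and3P [E1 uS p1S] _ _.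
move: uS p1S; rewrite !inE => /andP[uS _] /andP[p1S p1v].
rewrite ltnS in p1v.
case: (ltngtP u p1) => h.
- exists (u, p1); split => //=; by rewrite /edge_of /= h E1.
- exists (p1, u); split => //=; [by rewrite /edge_of /= h sym E1 | exact: ltnW | exact: ltnW uv].
- have eq : u = p1 by apply: val_inj.
  by move: E1; rewrite -eq irr.
Qed.

Lemma arith n (h e f : 'I_n * 'I_n) :
  h.1 <= minn e.1 f.1 -> h.2 <= maxn e.1 f.1 -> h.1 < h.2 ->
  e.1 < e.2 -> f.1 < f.2 -> cross e f ->
  [&& lex_lt h e, lex_lt h f, colex_lt h e & colex_lt h f].
Proof.
rewrite /cross /lex_lt /colex_lt -!val_eqE /=; lia.
Qed.

Theorem proposition5p12 (n : nat) (E : rel 'I_n) :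
  simple_graph E -> perfectly_labeled E -> crossing_closed E ->
  upper_crossing_closed E (@colex_lt n) /\ upper_crossing_closed E (@lex_lt n).
Proof.
move=> [sym irr] pl cc.
suff H: forall e f, edge_of E e -> edge_of E f -> cross e f ->
    forall J, is_J E e f J ->
      exists h, [/\ edge_of E h, h.1 \in J, h.2 \in J &
        [&& lex_lt h e, lex_lt h f, colex_lt h e & colex_lt h f]].
  split; split => // e f He Hf Hx J HJ; have [h [H1 H2 H3 /and4P[]]] := H e f He Hf Hx J HJ;
  by exists h.
move=> e f He Hf Hx J [[[[_ Hcon] [e1 e2 f1 f2]] _] _].
have He' := He; have Hf' := Hf.
move: He' Hf' => /andP[He1 _] /andP[Hf1 _].
case: (ltngtP e.1 f.1) => c.
- have [h [Eh h1 h2 hu hv]] := key sym irr pl (Hcon _ _ e1 f1) c.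
  exists h; split => //; apply: arith => //; last by move/andP: Eh => [].
  + by rewrite (minn_idPl (ltnW c)).
  + by rewrite (maxn_idPr (ltnW c)).
- have [h [Eh h1 h2 hu hv]] := key sym irr pl (Hcon _ _ f1 e1) c.
  exists h; split => //; apply: arith => //; last by move/andP: Eh => [].
  + by rewrite (minn_idPr (ltnW c)).
  + by rewrite (maxn_idPl (ltnW c)).
- by move: Hx; rewrite /cross -c; lia.
Qed.
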